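(* There is an absolute constant $c>0$ such that the following holds. Let $K\ge4$ and $T\ge K^3$. Define valuations $v_i=\tfrac12+\frac{i-1}{4K-2i-2}$ for $i\in[K]$ (so $v_1=\tfrac12$, $v_K=1$), and set $\varepsilon=\frac{1}{3\sqrt{24}}\sqrt{(K-2)/T}$. For $j\in\{2,\dots,K-1\}$ let $Q_j$ be the distribution on $\{v_1,\dots,v_K\}$ with $Q_j(v_{j-1})=\frac{1}{2K-2}-\varepsilon$, $Q_j(v_j)=\frac{1}{2K-2}+\varepsilon$, $Q_j(v_K)=\tfrac12$, and $Q_j(v_i)=\frac{1}{2K-2}$ for all other $i$. Let $J$ be uniform on $\{2,\dots,K-1\}$ and $Q_\star=Q_J$. Then for every (possibly randomized) non-contextual pricing algorithm $\mathcal{A}$, $\mathbb{E}[R(T)]\ge c\sqrt{KT}$, where the expectation is over $J$, the valuations, and $\mathcal{A}$.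
   Context: Non-contextual pricing: a valuation distribution $Q_\star$ on $[0,1]$ is fixed. In each round $t=1,\dots,T$, a valuation $V_t\sim Q_\star$ is drawn i.i.d.; the seller, based on $(p_\tau,y_\tau)_{\tau<t}$, posts $p_t\in[0,1]$ and observes $y_t=\mathbf{1}\{V_t\ge p_t\}$. With $\mathsf{dem}_Q(p)=\mathbb{P}_{v\sim Q}[v\ge p]$, $\mathsf{rev}_Q(p)=p\,\mathsf{dem}_Q(p)$ and $\mathsf{gap}_Q(p)=\max_{x\in[0,1]}\mathsf{rev}_Q(x)-\mathsf{rev}_Q(p)$, the regret is $R(T)=\sum_{t=1}^T\mathsf{gap}_{Q_\star}(p_t)$. *)

(* Defs.v *)
From HB Require Import structures.
From mathcomp Require Import all_boot all_order all_algebra.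
From mathcomp Require Import all_classical all_reals all_analysis.
From mathcomp Require Import Rstruct.
Unset Printing Implicit Defensive.
Import Order.TTheory GRing.Theory Num.Theory.
Local Open Scope ring_scope.

Notation RR := Rdefinitions.R.

Definition val_i (K i : nat) : RR :=
  2^-1 + (i.-1)%:R / (4 * K%:R - 2 * i%:R - 2).

(* the K support points, indexed by i : 'I_K standing for the 1-based index i.+1 *)
Definition vv (K : nat) (i : 'I_K) : RR := val_i K i.+1.

Definition eps (K T : nat) : RR :=
  (3 * Num.sqrt 24)^-1 * Num.sqrt ((K%:R - 2) / T%:R).

(* Q_j(v_i), with j and i both 1-based (i = val i' + 1 for i' : 'I_K) *)
Definition Qj (K T j : nat) (i : 'I_K) : RR :=
  if i.+1 == K then 2^-1
  else if i.+1 == j.-1 then (2 * K%:R - 2)^-1 - eps K T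
  else if i.+1 == j then (2 * K%:R - 2)^-1 + eps K T
  else (2 * K%:R - 2)^-1.

Definition dem (K T j : nat) (p : RR) : RR :=
  \sum_(i < K) Qj K T j i * (if p <= vv K i then 1 else 0).
Definition rev (K T j : nat) (p : RR) : RR := p * dem K T j p.
Definition gap (K T j : nat) (p : RR) : RR :=
  sup [set rev K T j x | x in `[0, 1]%classic] - rev K T j p.

(* A deterministic policy maps the past feedback bits (y_1,...,y_{t-1}) to the
   price p_t (given the realised seed of the algorithm, past prices are
   themselves functions of past feedback). *)
Definition policy := seq bool -> RR.

Definition hist (K : nat) (alg : policy) (s : seq 'I_K) : seq bool :=
  foldl (fun h i => rcons h (alg h <= vv K i)) [::] s.

Definition regret (K T j : nat) (alg : policy) (vs : T.-tuple 'I_K) : RR :=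
  \sum_(t < T) gap K T j (alg (hist K alg (take t vs))).

(* expected regret of a deterministic policy: J uniform on {2,...,K-1},
   valuations i.i.d. from Q_J *)
Definition exp_regret (K T : nat) (alg : policy) : RR :=
  (K%:R - 2)^-1 * \sum_(2 <= j < K)
     \sum_(vs : T.-tuple 'I_K) (\prod_(t < T) Qj K T j (tnth vs t)) * regret K T j alg vs.

(* Main.v *)
Require Import Defs.
From HB Require Import structures.
From mathcomp Require Import all_boot all_order all_algebra.
From mathcomp Require Import all_classical all_reals all_analysis.
From mathcomp Require Import Rstruct.
From mathcomp Require Import ring lra zify.
Import Order.TTheory GRing.Theory Num.Theory.
Local Open Scope ring_scope.

Section Proc.
Variable alg : policy.

Fixpoint Ex (d : RR -> RR) (h : seq bool) (n : nat) (F : seq bool -> RR) : RR :=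
  match n with
  | 0 => F h
  | n'.+1 => d (alg h) * Ex d (rcons h true) n' F
             + (1 - d (alg h)) * Ex d (rcons h false) n' F
  end.

Lemma Ex_ext d n h F G : (forall y, size y = (size h + n)%N -> F y = G y) ->
  Ex d h n F = Ex d h n G.
Proof.
elim: n h => [|n IH] h FG /=; first by apply: FG; rewrite addn0.
rewrite (IH (rcons h true)) ?(IH (rcons h false)) // => y;
  rewrite size_rcons addSnnS; exact: FG.
Qed.

Lemma Ex_mono d n h F G : (forall p, 0 <= d p <= 1) ->
  (forall y, size y = (size h + n)%N -> F y <= G y) ->
  Ex d h n F <= Ex d h n G.
Proof.
move=> d01; elim: n h => [|n IH] h FG /=; first by apply: FG; rewrite addn0.
have /andP[d0 d1] := d01 (alg h).
apply: lerD; apply: ler_wpM2l; rewrite ?subr_ge0 //; apply: IH => y;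
  rewrite size_rcons addSnnS; exact: FG.
Qed.

Lemma Ex_lin d n h a F G :
  Ex d h n (fun y => a * F y + G y) = a * Ex d h n F + Ex d h n G.
Proof.
elim: n h => [|n IH] h //=; rewrite !IH; ring.
Qed.

Lemma Ex_cst d n h c : Ex d h n (fun _ => c) = c.
Proof. elim: n h => [|n IH] h //=; rewrite !IH; ring. Qed.

Lemma Ex_sum d n h (I : Type) (r : seq I) (P : pred I) (F : I -> seq bool -> RR) :
  Ex d h n (fun y => \sum_(j <- r | P j) F j y) = \sum_(j <- r | P j) Ex d h n (F j).
Proof.
elim: n h => [|n IH] h //=; rewrite !IH !mulr_sumr -big_split //.
Qed.

Definition histh K (h : seq bool) (s : seq 'I_K) :=
  foldl (fun h i => rcons h (alg h <= vv K i)) h s.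

Lemma sum_tuple0 K (f : 0.-tuple 'I_K -> RR) : \sum_(vs : 0.-tuple 'I_K) f vs = f [tuple].
Proof. by rewrite (big_pred1 [tuple]) // => vs; rewrite /= [vs]tuple0; apply/esym/eqP. Qed.

Lemma sum_tupleS K n (f : n.+1.-tuple 'I_K -> RR) :
  \sum_(vs : n.+1.-tuple 'I_K) f vs =
  \sum_(i < K) \sum_(vs : n.-tuple 'I_K) f [tuple of i :: vs].
Proof.
rewrite pair_big /=.
rewrite (reindex (fun p : 'I_K * n.-tuple 'I_K => [tuple of p.1 :: p.2])) //=.
exists (fun vs : n.+1.-tuple 'I_K => (thead vs, [tuple of behead vs])).
  by move=> [i vs] _ /=; congr pair; apply: val_inj.
by move=> vs _; apply: val_inj => /=; case: vs => -[|x s] //.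
Qed.

Lemma Ex_tuple K (Q : 'I_K -> RR) n h F :
  \sum_(i < K) Q i = 1 ->
  \sum_(vs : n.-tuple 'I_K) (\prod_(t < n) Q (tnth vs t)) * F (histh K h vs) =
  Ex (fun p => \sum_(i < K) Q i * (if p <= vv K i then 1 else 0)) h n F.
Proof.
move=> Q1; elim: n h => [|n IH] h.
  by rewrite sum_tuple0 big_ord0 mul1r.
rewrite sum_tupleS /=.
have step i : \sum_(vs : n.-tuple 'I_K)
   (\prod_(t < n.+1) Q (tnth [tuple of i :: vs] t)) * F (histh K h [tuple of i :: vs])
   = Q i * Ex (fun p => \sum_(i0 < K) Q i0 * (if p <= vv K i0 then 1 else 0))
       (rcons h (alg h <= vv K i)) n F.
  rewrite -IH mulr_sumr; apply: eq_bigr => vs _.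
  rewrite big_ord_recl /= -mulrA; congr (_ * (_ * _)).
  by apply: eq_bigr => t _; rewrite (tnth_nth (tnth_default vs t)) /= -tnth_nth.
rewrite (eq_bigr _ (fun i _ => step i)).
set d := (fun p : RR => _).
rewrite (eq_bigr (fun i => Q i * (if alg h <= vv K i then 1 else 0) * Ex d (rcons h true) n F
    + (Q i - Q i * (if alg h <= vv K i then 1 else 0)) * Ex d (rcons h false) n F)); last first.
  by move=> i _; case: ifP => _; ring.
move: (Ex d (rcons h true) n F) (Ex d (rcons h false) n F) => E1 E0.
rewrite big_split /= -!mulr_suml sumrB Q1; ring.
Qed.

End Proc.

Lemma histh_cat alg K h s1 s2 :
  histh alg K h (s1 ++ s2) = histh alg K (histh alg K h s1) s2.
Proof. by rewrite /histh foldl_cat. Qed.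

Lemma histh_ext alg K h s : exists r, histh alg K h s = h ++ r.
Proof.
elim: s h => [|i s IH] h /=; first by exists [::]; rewrite cats0.
have [r ->] := IH (rcons h (alg h <= vv K i)).
by exists ((alg h <= vv K i) :: r); rewrite cat_rcons.
Qed.

Lemma size_histh alg K h s : size (histh alg K h s) = (size h + size s)%N.
Proof.
elim: s h => [|i s IH] h /=; first by rewrite addn0.
by rewrite IH size_rcons addSnnS.
Qed.

Lemma hist_take K alg (s : seq 'I_K) t : (t <= size s)%N ->
  hist K alg (take t s) = take t (hist K alg s).
Proof.
move=> ts.
have -> : hist K alg s = histh alg K [::] s by [].
rewrite -{2}(cat_take_drop t s) histh_cat.
have [r ->] := histh_ext alg K (histh alg K [::] (take t s)) (drop t s).
rewrite take_size_cat //.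
by rewrite size_histh /= size_take; case: ltnP ts => //= ? ?; apply/eqP; rewrite eqn_leq; apply/andP.
Qed.

Definition Greg K T j (alg : policy) (y : seq bool) : RR :=
  \sum_(t < T) gap K T j (alg (take t y)).

Lemma regretE K T j alg (vs : T.-tuple 'I_K) :
  regret K T j alg vs = Greg K T j alg (hist K alg vs).
Proof.
rewrite /regret /Greg; apply: eq_bigr => t _.
by rewrite hist_take // size_tuple ltnW.
Qed.

Lemma exp_regretE K T alg :
  (forall j, (2 <= j < K)%N -> \sum_(i < K) Qj K T j i = 1) ->
  exp_regret K T alg = (K%:R - 2)^-1 *
    \sum_(2 <= j < K) Ex alg (dem K T j) [::] T (Greg K T j alg).
Proof.
move=> HQ; rewrite /exp_regret; congr (_ * _).
rewrite !big_nat; apply: eq_bigr => j hj.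
rewrite -(Ex_tuple alg K (Qj K T j)) ?HQ //.
apply: eq_bigr => vs _; by rewrite regretE.
Qed.

Definition ind (b : bool) : RR := if b then 1 else 0.

Lemma valE K i : (2 <= K)%N -> (1 <= i <= K)%N ->
  val_i K i = (K%:R - 1) / (2 * K%:R - i%:R - 1).
Proof.
move=> K2 /andP[i1 iK].
have hK : (2:RR) <= K%:R by rewrite (ler_nat _ 2).
have hi1 : (1:RR) <= i%:R by rewrite (ler_nat _ 1).
have hiK : i%:R <= K%:R :> RR by rewrite ler_nat.
rewrite /val_i.
have -> : (i.-1)%:R = i%:R - 1 :> RR by rewrite -[in RHS](prednK i1) -natr1 addrK.
field.
by apply/andP; split; apply/eqP; lra.
Qed.

Lemma val_le K i i' : (2 <= K)%N -> (1 <= i)%N -> (i <= i')%N -> (i' <= K)%N ->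
  val_i K i <= val_i K i'.
Proof.
move=> K2 i1 ii i'K.
have c1 : (1 <= i <= K)%N by rewrite i1 (leq_trans ii i'K).
have c2 : (1 <= i' <= K)%N by rewrite (leq_trans i1 ii) i'K.
rewrite (valE _ _ K2 c1) (valE _ _ K2 c2).
have hK : (2:RR) <= K%:R by rewrite (ler_nat _ 2).
have hi1 : (1:RR) <= i%:R by rewrite (ler_nat _ 1).
have hii : i%:R <= i'%:R :> RR by rewrite ler_nat.
have hiK : i'%:R <= K%:R :> RR by rewrite ler_nat.
rewrite ler_pM2l; last by lra.
rewrite lef_pV2 ?posrE; lra.
Qed.

Lemma val_lt K i i' : (2 <= K)%N -> (1 <= i)%N -> (i < i')%N -> (i' <= K)%N ->
  val_i K i < val_i K i'.
Proof.
move=> K2 i1 ii i'K.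
have c1 : (1 <= i <= K)%N by rewrite i1 (leq_trans (ltnW ii) i'K).
have c2 : (1 <= i' <= K)%N by rewrite (leq_trans i1 (ltnW ii)) i'K.
rewrite (valE _ _ K2 c1) (valE _ _ K2 c2).
have hK : (2:RR) <= K%:R by rewrite (ler_nat _ 2).
have hi1 : (1:RR) <= i%:R by rewrite (ler_nat _ 1).
have hii : i%:R + 1 <= i'%:R :> RR by rewrite natr1 ler_nat.
have hiK : i'%:R <= K%:R :> RR by rewrite ler_nat.
rewrite ltr_pM2l; last by lra.
rewrite ltf_pV2 ?posrE; lra.
Qed.

Lemma val_K K : (2 <= K)%N -> val_i K K = 1.
Proof.
move=> K2; rewrite valE ?leqnn ?(leq_trans _ K2) //.
have hK : (2:RR) <= K%:R by rewrite (ler_nat _ 2).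
field; apply/eqP; lra.
Qed.

Lemma val_one K : val_i K 1 = 2^-1.
Proof. by rewrite /val_i /= mul0r addr0. Qed.

Lemma Q0E K T (i : 'I_K) : Qj K T 0 i = if i.+1 == K then 2^-1 else (2 * K%:R - 2)^-1.
Proof. by rewrite /Qj /=. Qed.

Lemma QjE K T j (i : 'I_K) : (2 <= j < K)%N ->
  Qj K T j i = Qj K T 0 i + eps K T * ((i.+1 == j)%:R - (i.+1 == j.-1)%:R).
Proof.
move=> /andP[j2 jK]; rewrite /Qj /=.
case: (i.+1 =P K) => e1; case: (i.+1 =P j.-1) => e2; case: (i.+1 =P j) => e3;
  rewrite /=; try lia; ring.
Qed.

Lemma tail0 K T k : (2 <= K)%N -> (k < K)%N ->
  \sum_(i < K) Qj K T 0 i * ind (k <= i)%N = (2 * K%:R - 2 - k%:R) / (2 * K%:R - 2).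
Proof.
move=> K2 kK.
pose F (i : nat) : RR := (if i.+1 == K then 2^-1 else (2 * K%:R - 2)^-1) * ind (k <= i)%N.
rewrite (eq_bigr (fun i : 'I_K => F i)); last by move=> i _; rewrite Q0E.
rewrite -(big_mkord xpredT F).
have KE : K = (K.-1).+1 by rewrite prednK // (leq_trans _ K2).
have kK1 : (k <= K.-1)%N by rewrite -ltnS -KE.
have -> : \sum_(0 <= i < K) F i = \sum_(0 <= i < K.-1.+1) F i by rewrite -KE.
rewrite big_nat_recr //= (big_cat_nat _ (n := k)) //=.
rewrite big_nat big1; last first.
  by move=> i /andP[_ ik]; rewrite /F /ind leqNgt ik mulr0.
rewrite add0r big_nat (eq_bigr (fun _ => (2 * K%:R - 2)^-1)); last first.
  move=> i /andP[ki iK]; rewrite /F /ind ki mulr1.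
  by rewrite ifF //; apply/eqP => e; lia.
rewrite -big_nat sumr_const_nat /F /ind kK1 -KE eqxx mulr1 -[X in X + _]mulr_natr.
have hK : (2:RR) <= K%:R by rewrite (ler_nat _ 2).
rewrite natrB // (_ : (K.-1)%:R = K%:R - 1 :> RR); last first.
  by rewrite [in RHS]KE -natr1 addrK.
field; apply/eqP; lra.
Qed.

Lemma sumQ0 K T : (2 <= K)%N -> \sum_(i < K) Qj K T 0 i = 1.
Proof.
move=> K2; rewrite -[RHS](_ : (2 * K%:R - 2 - 0%:R) / (2 * K%:R - 2) = 1 :> RR).
  rewrite -(tail0 K T 0 K2); last by rewrite (leq_trans _ K2).
  by apply: eq_bigr => i _; rewrite /ind leq0n mulr1.
have hK : (2:RR) <= K%:R by rewrite (ler_nat _ 2).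
rewrite subr0; apply: divff; apply/eqP; lra.
Qed.

Lemma dem0_char K T p k : (2 <= K)%N -> (k < K)%N ->
  (k = 0%N \/ val_i K k < p) -> p <= val_i K k.+1 ->
  dem K T 0 p = (2 * K%:R - 2 - k%:R) / (2 * K%:R - 2).
Proof.
move=> K2 kK hk hp; rewrite /dem -(tail0 K T k) //; apply: eq_bigr => i _.
congr (_ * _); rewrite /ind /vv.
case: (leqP k i) => ki.
  by rewrite (le_trans hp) // val_le.
case: hk => [k0|hk]; first by move: ki; rewrite k0.
case: ifP => // hpi; have := le_lt_trans (@val_le K i.+1 k K2 (ltn0Sn i) ki (ltnW kK)) hk.
by rewrite (le_gtF hpi).
Qed.

Lemma dem0_gt1 K T p : (2 <= K)%N -> 1 < p -> dem K T 0 p = 0.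
Proof.
move=> K2 p1; rewrite /dem big1 // => i _.
rewrite /vv ifF ?mulr0 //; apply/negbTE; rewrite -ltNge.
by apply: le_lt_trans p1; rewrite -(val_K _ K2) val_le.
Qed.

Lemma rev0_le K T p : (2 <= K)%N -> 0 <= p -> p * dem K T 0 p <= 2^-1.
Proof.
move=> K2 p0.
case: (ltP 1 p) => p1; first by rewrite dem0_gt1 // mulr0.
have hK : (2:RR) <= K%:R by rewrite (ler_nat _ 2).
pose P := fun k : nat => p <= val_i K k.+1.
have exP : exists n, P n by exists K.-1; rewrite /P prednK ?(leq_trans _ K2) // val_K.
case: (ex_minnP exP) => m Pm minm.
have mK : (m < K)%N.
  have h : (m <= K.-1)%N by apply: minm; rewrite /P prednK ?(leq_trans _ K2) // val_K.
  lia.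
have hm : m = 0%N \/ val_i K m < p.
  case: m Pm minm mK => [|m'] Pm minm mK; first by left.
  right; rewrite ltNge; apply/negP => hp.
  by have := minm m' hp; rewrite ltnn.
rewrite (@dem0_char K T p m K2 mK hm Pm).
have hmK : m%:R + 1 <= K%:R :> RR by rewrite natr1 ler_nat.
have D0 : 0 <= (2 * K%:R - 2 - m%:R) / (2 * K%:R - 2) :> RR.
  by apply: divr_ge0; lra.
apply: le_trans (ler_wpM2r D0 Pm) _.
rewrite valE // -[m.+1%:R]natr1.
have -> : (K%:R - 1) / (2 * K%:R - (m%:R + 1) - 1) *
   ((2 * K%:R - 2 - m%:R) / (2 * K%:R - 2)) = 2^-1 :> RR.
  by field; apply/andP; split; apply/eqP; lra.
by [].
Qed.

Lemma sum_pick K (f : 'I_K -> RR) (j : nat) (hj : (j < K)%N) :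
  \sum_(i < K) (val i == j)%:R * f i = f (Ordinal hj).
Proof.
rewrite (bigD1 (Ordinal hj)) //= eqxx mul1r big1 ?addr0 // => i ne.
have -> : (val i == j) = false by apply/negbTE; move: ne; apply: contra => /eqP e; apply/eqP/val_inj.
by rewrite mul0r.
Qed.

Lemma demj_split K T j p : (2 <= j < K)%N ->
  dem K T j p = dem K T 0 p + eps K T * (ind (p <= val_i K j) - ind (p <= val_i K j.-1)).
Proof.
move=> hj; have /andP[j2 jK] := hj.
rewrite /dem (eq_bigr (fun i : 'I_K => Qj K T 0 i * (if p <= vv K i then 1 else 0) +
   eps K T * ((val i == j.-1)%:R * (if p <= vv K i then 1 else 0)
            - (val i == j.-2)%:R * (if p <= vv K i then 1 else 0)))); last first.
  move=> i _; rewrite QjE //.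
  have -> : (i.+1 == j) = (val i == j.-1) by rewrite -(eqSS i) prednK ?(leq_trans _ j2).
  have -> : (i.+1 == j.-1) = (val i == j.-2).
    by rewrite -(eqSS i) -[j.-1]prednK // -ltnS prednK ?(leq_trans _ j2).
  by rewrite mulrDl -mulrA mulrBl.
have hj1 : (j.-1 < K)%N by rewrite (leq_ltn_trans (leq_pred j)).
have hj2 : (j.-2 < K)%N by rewrite (leq_ltn_trans (leq_pred _) hj1).
rewrite big_split /= -mulr_sumr sumrB !sum_pick /vv /=.
rewrite prednK ?(leq_trans _ j2) // prednK //; last by rewrite -ltnS prednK ?(leq_trans _ j2).
Qed.

Lemma eps_ge0 K T : 0 <= eps K T.
Proof. by rewrite /eps mulr_ge0 ?invr_ge0 ?mulr_ge0 ?sqrtr_ge0. Qed.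

Lemma eps_sq K T : (2 <= K)%N -> (0 < T)%N ->
  eps K T ^+ 2 = (K%:R - 2) / (216 * T%:R).
Proof.
move=> K2 T0.
have hK : (2:RR) <= K%:R by rewrite (ler_nat _ 2).
have hT : (1:RR) <= T%:R by rewrite (ler_nat _ 1).
rewrite /eps exprMn exprVn exprMn sqr_sqrtr ?sqr_sqrtr //; last first.
  by apply: divr_ge0; lra.
field; apply/eqP; lra.
Qed.

Section EpsFacts.
Variables (K T : nat).
Hypothesis K4 : (4 <= K)%N.
Hypothesis KT : (K ^ 3 <= T)%N.

Lemma K2 : (2 <= K)%N. Proof. exact: leq_trans K4. Qed.
Lemma T0 : (0 < T)%N.
Proof. by apply: leq_trans KT; rewrite expn_gt0 (leq_trans _ K4). Qed.
Lemma hK4 : (4:RR) <= K%:R. Proof. by rewrite (ler_nat _ 4). Qed.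
Lemma hKT : K%:R ^+ 3 <= T%:R :> RR. Proof. by rewrite -natrX ler_nat. Qed.

Lemma eps_small : 14 * (K%:R - 1) * eps K T <= 1.
Proof.
have e0 := eps_ge0 K T; have k4 := hK4; have kt := hKT.
have : (14 * (K%:R - 1) * eps K T) ^+ 2 <= 1.
  rewrite exprMn (@eps_sq K T K2 T0) mulrA ler_pdivrMr; last by nra.
  rewrite mul1r; nra.
set x := 14 * _ * _ => hx.
have : 0 <= x by rewrite /x mulr_ge0 // mulr_ge0 //; lra.
nra.
Qed.

Lemma eps2E : eps K T ^+ 2 = (K%:R - 2) / (216 * T%:R).
Proof. exact: (@eps_sq K T K2 T0). Qed.

End EpsFacts.

Definition Ij K j p := (val_i K j.-1 < p) && (p <= val_i K j).

Section Dem.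
Variables (K T j : nat).
Hypothesis K4 : (4 <= K)%N.
Hypothesis KT : (K ^ 3 <= T)%N.
Hypothesis hj : (2 <= j < K)%N.

Let K2 := @K2 K K4.
Let j2 : (2 <= j)%N. Proof. by case/andP: hj. Qed.
Let jK : (j < K)%N. Proof. by case/andP: hj. Qed.

Lemma dem_notI p : ~~ Ij K j p -> dem K T j p = dem K T 0 p.
Proof.
move=> nI; rewrite demj_split //.
case h1: (p <= val_i K j.-1).
  rewrite /ind (le_trans (idP h1)) ?subrr ?mulr0 ?addr0 //.
  by apply: val_le => //; [lia | apply: leq_pred | apply: ltnW].
move: nI; rewrite /Ij.
have -> : (val_i K j.-1 < p) by rewrite ltNge h1.
move=> /= /negbTE h2.
by rewrite /ind h2 subrr mulr0 addr0.
Qed.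

Lemma dem0_I p : Ij K j p -> dem K T 0 p = (2 * K%:R - 1 - j%:R) / (2 * K%:R - 2).
Proof.
move=> /andP[h1 h2].
have hk : (j.-1 < K)%N by lia.
have h2' : p <= val_i K j.-1.+1 by rewrite prednK // (leq_trans _ j2).
rewrite (@dem0_char K T p j.-1 K2 hk (or_intror h1) h2').
have -> : (j.-1)%:R = j%:R - 1 :> RR by rewrite -[in RHS](@prednK j) ?(leq_trans _ j2) // -natr1 addrK.
congr (_ / _); ring.
Qed.

Lemma demj_I p : Ij K j p -> dem K T j p = dem K T 0 p + eps K T.
Proof.
move=> hI; have /andP[h1 h2] := hI; rewrite demj_split // /ind h2 ifF ?subr0 ?mulr1 //.
by apply/negbTE; rewrite -ltNge.
Qed.

Lemma dem0_01 p : 0 <= dem K T 0 p <= 1.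
Proof.
apply/andP; split.
  by rewrite /dem sumr_ge0 // => i _; rewrite mulr_ge0 // ?Q0E; case: ifP => _ //;
    rewrite invr_ge0 //; have := @hK4 K K4; lra.
rewrite -(sumQ0 K T K2) /dem ler_sum // => i _.
have : 0 <= Qj K T 0 i by rewrite Q0E; case: ifP => _ //; rewrite invr_ge0 //; have := @hK4 K K4; lra.
case: ifP => _; lra.
Qed.

Lemma demj_01 p : 0 <= dem K T j p <= 1.
Proof.
case hI: (Ij K j p); last by rewrite dem_notI ?hI // dem0_01.
rewrite demj_I // dem0_I //.
have k4 := @hK4 K K4; have es := @eps_small K T K4 KT; have e0 := eps_ge0 K T.
have j2' : (2:RR) <= j%:R by rewrite (ler_nat _ 2).
have jK' : j%:R + 1 <= K%:R :> RR by rewrite natr1 ler_nat.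
have h : (2 * K%:R - 1 - j%:R) / (2 * K%:R - 2) = 1 - (j%:R - 1) / (2 * K%:R - 2) :> RR.
  by field; apply/eqP; lra.
rewrite h.
have a1 : (j%:R - 1) / (2 * K%:R - 2) <= 1 :> RR by rewrite ler_pdivrMr; lra.
have a0 : 0 <= (j%:R - 1) / (2 * K%:R - 2) :> RR by apply: divr_ge0; lra.
have : eps K T <= (j%:R - 1) / (2 * K%:R - 2).
  rewrite ler_pdivlMr; last by lra.
  nra.
move=> ea; apply/andP; split; lra.
Qed.

Lemma val_ge0 i : (1 <= i <= K)%N -> 0 <= val_i K i.
Proof.
move=> hi; rewrite valE //; have := @hK4 K K4; have /andP[i1 iK] := hi.
have : i%:R <= K%:R :> RR by rewrite ler_nat.
move=> h1 h2; apply: divr_ge0; lra.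
Qed.

Lemma sumQj : \sum_(i < K) Qj K T j i = 1.
Proof.
have := @demj_split K T j 0 hj.
have vi (i : 'I_K) : 0 <= vv K i by rewrite /vv val_ge0 //; apply/andP; split.
rewrite /ind !val_ge0; first last.
  by apply/andP; split; lia.
  by apply/andP; split; lia.
rewrite subrr mulr0 addr0 /dem.
under eq_bigr do rewrite vi mulr1.
under [X in _ = X -> _]eq_bigr do rewrite vi mulr1.
by rewrite sumQ0 // => ->.
Qed.

End Dem.

Section Gap.
Variables (K T j : nat).
Hypothesis K4 : (4 <= K)%N.
Hypothesis KT : (K ^ 3 <= T)%N.
Hypothesis hj : (2 <= j < K)%N.

Let K2 := @K2 K K4.
Let j2 : (2 <= j)%N. Proof. by case/andP: hj. Qed.
Let jK : (j < K)%N. Proof. by case/andP: hj. Qed.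

Lemma vj_ge : 2^-1 <= val_i K j.
Proof. by rewrite -(val_one K) val_le //; [lia | apply: ltnW]. Qed.

Lemma vj_le : val_i K j <= 1.
Proof. by rewrite -(val_K _ K2) val_le //; [lia | apply: ltnW]. Qed.

Lemma Ij_vj : Ij K j (val_i K j).
Proof.
rewrite /Ij lexx andbT; apply: val_lt => //; first by lia.
  by rewrite prednK // (leq_trans _ j2).
by apply: ltnW.
Qed.

Lemma rev_notI p : 0 <= p -> ~~ Ij K j p -> Defs.rev K T j p <= 2^-1.
Proof. by move=> p0 nI; rewrite /Defs.rev (@dem_notI K T j K4 KT hj p nI) rev0_le. Qed.

Lemma rev_vj : Defs.rev K T j (val_i K j) = 2^-1 + val_i K j * eps K T.
Proof.
rewrite /Defs.rev (@demj_I K T j hj _ Ij_vj) (@dem0_I K T j K4 KT hj _ Ij_vj) mulrDr; congr (_ + _).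
have k4 := @hK4 K K4.
have jK' : j%:R + 1 <= K%:R :> RR by rewrite natr1 ler_nat.
rewrite valE //; last by apply/andP; split; lia.
by field; apply/andP; split; apply/eqP; lra.
Qed.

Lemma gap_lb p : 0 <= p <= 1 ->
  eps K T / 2 * (1 - ind (Ij K j p)) <= gap K T j p.
Proof.
move=> /andP[p0 p1].
rewrite /gap; set S := (X in sup X).
have ub : has_ubound S.
  exists 1 => _ [x hx <-]; move: hx; rewrite /= in_itv /= => /andP[x0 x1].
  have /andP[d0 d1] := @demj_01 K T j K4 KT hj x.
  rewrite /Defs.rev; nra.
have hp : Defs.rev K T j p <= sup S.
  by apply: ub_le_sup => //; exists p => //; rewrite /= in_itv /= p0 p1.
have hv : Defs.rev K T j (val_i K j) <= sup S.
  apply: ub_le_sup => //; exists (val_i K j) => //; rewrite /= in_itv /= vj_le andbT.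
  by apply: le_trans vj_ge.
rewrite /ind; case: ifP => hI.
  by rewrite subrr mulr0 subr_ge0.
have := rev_notI p p0 (negbT hI); rewrite rev_vj in hv.
have := vj_ge; have := eps_ge0 K T.
nra.
Qed.

End Gap.

Lemma expR_tangent (x z : RR) : expR z * (1 + x - z) <= expR x.
Proof.
have h := expR_ge1Dx (x - z).
have e : expR x = expR z * expR (x - z) by rewrite -exp.expRD addrCA subrr addr0.
rewrite e; apply: ler_wpM2l; [exact: expR_ge0 | lra].
Qed.

Lemma expR_convex (w x y : RR) : 0 <= w <= 1 ->
  expR (w * x + (1 - w) * y) <= w * expR x + (1 - w) * expR y.
Proof.
move=> /andP[w0 w1]; set z := w * x + (1 - w) * y.
have hx := expR_tangent x z; have hy := expR_tangent y z.
have ez := expR_gt0 z.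
have : w * (expR z * (1 + x - z)) + (1 - w) * (expR z * (1 + y - z)) = expR z.
  by rewrite /z; ring.
move=> <-; apply: lerD; apply: ler_wpM2l => //; lra.
Qed.

Lemma ln_ge (t : RR) : 0 < t -> 1 - t^-1 <= ln t.
Proof.
move=> t0; have := @le_ln1Dx RR (t^-1 - 1).
rewrite addrCA subrr addr0 lnV ?posrE // => h.
have ti : 0 < t^-1 by rewrite invr_gt0.
have : -1 < t^-1 - 1 by lra.
by move/h; lra.
Qed.

Lemma binary_gibbs (w u k a b : RR) : 0 < w < 1 -> 0 < u < 1 ->
  (w - u) ^+ 2 <= k * (u * (1 - u)) ->
  expR (w * a + (1 - w) * b - k) <= u * expR a + (1 - u) * expR b.
Proof.
move=> /andP[w0 w1] /andP[u0 u1] hk.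
have w'0 : 0 < 1 - w by lra.
have u'0 : 0 < 1 - u by lra.
set x := a + ln (u / w); set y := b + ln ((1 - u) / (1 - w)).
have ex : expR x = u / w * expR a.
  by rewrite /x exp.expRD lnK ?posrE ?divr_gt0 // mulrC.
have ey : expR y = (1 - u) / (1 - w) * expR b.
  by rewrite /y exp.expRD lnK ?posrE ?divr_gt0 // mulrC.
have -> : u * expR a + (1 - u) * expR b = w * expR x + (1 - w) * expR y.
  rewrite ex ey; field; apply/andP; split; apply/eqP; lra.
have w01 : 0 <= w <= 1 by apply/andP; split; lra.
apply: (le_trans _ (expR_convex w x y w01)).
rewrite ler_expR /x /y.
have l1 := ln_ge _ (divr_gt0 u0 w0); have l2 := ln_ge _ (divr_gt0 u'0 w'0).
have e : w * (1 - (u / w)^-1) + (1 - w) * (1 - ((1 - u) / (1 - w))^-1)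
     = - ((w - u) ^+ 2 / (u * (1 - u))).
  by field; do ! (apply/andP; split); apply/eqP; lra.
have hk' : (w - u) ^+ 2 / (u * (1 - u)) <= k.
  by rewrite ler_pdivrMr // mulr_gt0.
have : w * (1 - (u / w)^-1) <= w * ln (u / w) by rewrite ler_wpM2l //; lra.
have : (1 - w) * (1 - ((1 - u) / (1 - w))^-1) <= (1 - w) * ln ((1 - u) / (1 - w)).
  by rewrite ler_wpM2l //; lra.
lra.
Qed.

Lemma expR_chord (l c : RR) : 0 <= l <= 1 -> expR (l * c) <= 1 - l + l * expR c.
Proof.
move=> hl; have := expR_convex l c 0 hl; rewrite mulr0 addr0 exp.expR0 mulr1.
lra.
Qed.

Lemma expR_half : expR (- (2^-1)) <= 5 / 8 :> RR.
Proof.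
have h1 : 9 / 8 <= expR (8^-1) :> RR by have := expR_ge1Dx (8^-1 : RR); lra.
have h2 : expR (2^-1) = expR (8^-1) ^+ 4 :> RR.
  by rewrite -expRM_natl; congr expR; field.
have h3 : (9 / 8) ^+ 4 <= expR (8^-1) ^+ 4 :> RR.
  by rewrite lerXn2r // ?nnegrE ?expR_ge0 //; lra.
rewrite expRN h2; have e0 : 0 < expR (8^-1) ^+ 4 :> RR by rewrite exprn_gt0 ?expR_gt0.
rewrite -[5/8]invrK lef_pV2 ?posrE //; last by lra.
Qed.

Definition Nf K j (alg : policy) (y : seq bool) : RR :=
  \sum_(0 <= t < size y) ind (Ij K j (alg (take t y))).

Lemma Nf_rcons K j alg y b : Nf K j alg (rcons y b) = Nf K j alg y + ind (Ij K j (alg y)).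
Proof.
rewrite /Nf size_rcons big_nat_recr //= -cats1 take_size_cat //; congr (_ + _).
rewrite !big_nat; apply: eq_bigr => t /andP[_ ht].
by rewrite takel_cat // ltnW.
Qed.

Lemma ind_01 b : 0 <= ind b <= 1.
Proof. by rewrite /ind; case: b; rewrite ?lexx ?ler01. Qed.

Lemma Nf_bounds K j alg y : 0 <= Nf K j alg y <= (size y)%:R.
Proof.
apply/andP; split; first by rewrite /Nf sumr_ge0 // => t _; case/andP: (ind_01 (Ij K j (alg (take t y)))).
rewrite /Nf -[X in _ <= X%:R](subn0 (size y)) -sumr_const_nat ler_sum // => t _.
by case/andP: (ind_01 (Ij K j (alg (take t y)))).
Qed.

Section DV.
Variables (K T j : nat) (alg : policy).
Hypothesis K4 : (4 <= K)%N.
Hypothesis KT : (K ^ 3 <= T)%N.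
Hypothesis hj : (2 <= j < K)%N.

Let j2 : (2 <= j)%N. Proof. by case/andP: hj. Qed.
Let jK : (j < K)%N. Proof. by case/andP: hj. Qed.

Definition kap : RR := 14 / 3 * eps K T ^+ 2 * (K%:R - 1) / (j%:R - 1).

Lemma chi_bound p : Ij K j p ->
  (dem K T 0 p - dem K T j p) ^+ 2 <= kap * (dem K T j p * (1 - dem K T j p)).
Proof.
move=> hI; rewrite (@demj_I K T j hj p hI) (@dem0_I K T j K4 KT hj p hI).
have k4 := @hK4 K K4; have es := @eps_small K T K4 KT; have e0 := eps_ge0 K T.
have j2' : (2:RR) <= j%:R by rewrite (ler_nat _ 2).
have jK' : j%:R + 1 <= K%:R :> RR by rewrite natr1 ler_nat.
set e := eps K T in es e0 *.
have -> : (2 * K%:R - 1 - j%:R) / (2 * K%:R - 2) = 1 - (j%:R - 1) / (2 * K%:R - 2) :> RR.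
  by field; apply/eqP; lra.
set q := (j%:R - 1) / (2 * K%:R - 2).
have qe : (j%:R - 1) = q * (2 * K%:R - 2) by rewrite /q; field; apply/eqP; lra.
have q0 : 0 < q by rewrite /q divr_gt0 //; lra.
have q2 : q <= 2^-1 by rewrite /q ler_pdivrMr; lra.
have eq7 : 7 * e <= q.
  rewrite /q ler_pdivlMr; last by lra.
  rewrite (_ : 7 * e * (2 * K%:R - 2) = 14 * (K%:R - 1) * e); last by ring.
  lra.
rewrite /kap -/e.
have -> : (1 - q - (1 - q + e)) ^+ 2 = e ^+ 2 by ring.
rewrite qe.
have -> : 14 / 3 * e ^+ 2 * (K%:R - 1) / (q * (2 * K%:R - 2)) = 7 / 3 * e ^+ 2 / q.
  by field; apply/andP; split; apply/eqP; lra.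
rewrite mulrAC ler_pdivlMr //.
have : 6 / 7 * q <= 1 - (1 - q + e) by lra.
have : 2^-1 <= 1 - q + e by lra.
move=> h1 h2.
have h3 : 3 / 7 * q <= (1 - q + e) * (1 - (1 - q + e)) by nra.
have e2 : 0 <= e ^+ 2 by rewrite sqr_ge0.
nra.
Qed.

Lemma DV mu h n :
  expR (- (mu + kap) * Ex alg (dem K T 0) h n (Nf K j alg) + kap * Nf K j alg h)
  <= Ex alg (dem K T j) h n (fun y => expR (- mu * Nf K j alg y)).
Proof.
elim: n h => [|n IH] h /=.
  by rewrite (_ : - (mu + kap) * Nf K j alg h + kap * Nf K j alg h = - mu * Nf K j alg h) //; ring.
set w := dem K T 0 (alg h); set u := dem K T j (alg h).
set A1 := Ex alg _ (rcons h true) n _; set A0 := Ex alg _ (rcons h false) n _.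
set Z1 := Ex alg _ (rcons h true) n _; set Z0 := Ex alg _ (rcons h false) n _.
have I1 := IH (rcons h true); have I0 := IH (rcons h false).
rewrite !Nf_rcons -/A1 -/A0 -/Z1 -/Z0 in I1 I0.
have /andP[u0 u1] : 0 <= u <= 1 := @demj_01 K T j K4 KT hj (alg h).
have Zge : u * expR (- (mu + kap) * A1 + kap * (Nf K j alg h + ind (Ij K j (alg h))))
   + (1 - u) * expR (- (mu + kap) * A0 + kap * (Nf K j alg h + ind (Ij K j (alg h))))
   <= u * Z1 + (1 - u) * Z0.
  by apply: lerD; apply: ler_wpM2l => //; lra.
apply: le_trans Zge.
case hI: (Ij K j (alg h)).
  have /andP[dv0 dv1] : (0 < u < 1).
    rewrite /u (@demj_I K T j hj _ hI) (@dem0_I K T j K4 KT hj _ hI).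
    have k4 := @hK4 K K4; have es := @eps_small K T K4 KT; have e0 := eps_ge0 K T.
    have j2' : (2:RR) <= j%:R by rewrite (ler_nat _ 2).
    have jK' : j%:R + 1 <= K%:R :> RR by rewrite natr1 ler_nat.
    have -> : (2 * K%:R - 1 - j%:R) / (2 * K%:R - 2) = 1 - (j%:R - 1) / (2 * K%:R - 2) :> RR.
      by field; apply/eqP; lra.
    have q1 : (j%:R - 1) / (2 * K%:R - 2) <= 2^-1 :> RR by rewrite ler_pdivrMr; lra.
    have : eps K T * 7 <= (j%:R - 1) / (2 * K%:R - 2).
      rewrite ler_pdivlMr; last by lra.
      rewrite (_ : eps K T * 7 * (2 * K%:R - 2) = 14 * (K%:R - 1) * eps K T); last by ring.
      lra.
    have : 0 < (j%:R - 1) / (2 * K%:R - 2) :> RR by rewrite divr_gt0 //; lra.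
    move=> h1 h2; apply/andP; split; lra.
  have /andP[dw0 dw1] : (0 < w < 1).
    rewrite /w (@dem0_I K T j K4 KT hj _ hI).
    have k4 := @hK4 K K4.
    have j2' : (2:RR) <= j%:R by rewrite (ler_nat _ 2).
    have jK' : j%:R + 1 <= K%:R :> RR by rewrite natr1 ler_nat.
    apply/andP; split; first by rewrite divr_gt0 //; lra.
    by rewrite ltr_pdivrMr; lra.
  have hk := chi_bound (alg h) hI; rewrite -/w -/u in hk.
  have hb := binary_gibbs w u kap
    (- (mu + kap) * A1 + kap * (Nf K j alg h + ind true))
    (- (mu + kap) * A0 + kap * (Nf K j alg h + ind true))
    (introT andP (conj dw0 dw1)) (introT andP (conj dv0 dv1)) hk.
  apply: le_trans hb; rewrite ler_expR /ind.
  rewrite (_ : - (mu + kap) * (w * A1 + (1 - w) * A0) + kap * Nf K j alg h =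
     w * (- (mu + kap) * A1 + kap * (Nf K j alg h + 1)) +
     (1 - w) * (- (mu + kap) * A0 + kap * (Nf K j alg h + 1)) - kap) //.
  ring.
have uw : u = w by rewrite /u /w (@dem_notI K T j K4 KT hj _ (negbT hI)).
have /andP[w0 w1] : 0 <= w <= 1 by rewrite -uw u0 u1.
have hb := expR_convex w (- (mu + kap) * A1 + kap * (Nf K j alg h + ind false))
    (- (mu + kap) * A0 + kap * (Nf K j alg h + ind false)) (introT andP (conj w0 w1)).
rewrite uw; apply: le_trans hb; rewrite ler_expR /ind.
rewrite (_ : - (mu + kap) * (w * A1 + (1 - w) * A0) + kap * Nf K j alg h =
     w * (- (mu + kap) * A1 + kap * (Nf K j alg h + 0)) +
     (1 - w) * (- (mu + kap) * A0 + kap * (Nf K j alg h + 0))) //.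
ring.
Qed.

End DV.

Section Bound.
Variables (K T j : nat) (alg : policy).
Hypothesis K4 : (4 <= K)%N.
Hypothesis KT : (K ^ 3 <= T)%N.
Hypothesis hj : (2 <= j < K)%N.

Lemma Nf_nil : Nf K j alg [::] = 0.
Proof. by rewrite /Nf big_geq. Qed.

Lemma Ej_bound :
  Ex alg (dem K T j) [::] T (Nf K j alg) <=
  8 / 3 * (2^-1 + kap K T j * T%:R) * Ex alg (dem K T 0) [::] T (Nf K j alg).
Proof.
set C := Ex alg (dem K T 0) [::] T (Nf K j alg).
set E := Ex alg (dem K T j) [::] T (Nf K j alg).
have tt : (1 : RR) <= T%:R by rewrite (ler_nat _ 1) (@T0 K T K4 KT).
pose mu : RR := (2 * T%:R)^-1.
have d01 := @demj_01 K T j K4 KT hj.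
have h1 := @DV K T j alg K4 KT hj mu [::] T.
rewrite Nf_nil mulr0 addr0 -/C in h1.
have h2 : Ex alg (dem K T j) [::] T (fun y => expR (- mu * Nf K j alg y)) <=
    Ex alg (dem K T j) [::] T (fun y => ((expR (- 2^-1) - 1) / T%:R) * Nf K j alg y + 1).
  apply: Ex_mono => // y /= sy.
  have /andP[n0 n1] := Nf_bounds K j alg y; rewrite sy add0n in n1.
  set l := Nf K j alg y / T%:R.
  have l01 : 0 <= l <= 1.
    by apply/andP; split; [apply: divr_ge0; lra | rewrite ler_pdivrMr; lra].
  have := expR_chord l (- 2^-1) l01.
  rewrite (_ : l * - 2^-1 = - mu * Nf K j alg y); last by rewrite /l /mu; field; apply/eqP; lra.
  move=> h; apply: le_trans h _; rewrite /l.
  rewrite (_ : (expR (- 2^-1) - 1) / T%:R * Nf K j alg y + 1 =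
      1 - Nf K j alg y / T%:R + Nf K j alg y / T%:R * expR (- 2^-1)) //.
  by field; apply/eqP; lra.
rewrite Ex_lin Ex_cst -/E in h2.
have E0 : 0 <= E.
  rewrite -(Ex_cst alg (dem K T j) T [::] 0); apply: Ex_mono => // y _.
  by case/andP: (Nf_bounds K j alg y).
have h3 := expR_ge1Dx (- (mu + kap K T j) * C).
have eh := expR_half.
have h4 : (1 - expR (- 2^-1)) * (E / T%:R) <= (mu + kap K T j) * C.
  have : (expR (- 2^-1) - 1) / T%:R * E = - ((1 - expR (- 2^-1)) * (E / T%:R)).
    by field; apply/eqP; lra.
  move=> e; rewrite e in h2.
  have : - (mu + kap K T j) * C = - ((mu + kap K T j) * C) by ring.
  move=> e'; rewrite e' in h3 h1.
  lra.
have ET0 : 0 <= E / T%:R by apply: divr_ge0; lra.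
have h5 : 3 / 8 * (E / T%:R) <= (mu + kap K T j) * C.
  apply: le_trans h4; apply: ler_wpM2r => //; lra.
have -> : E = T%:R * (E / T%:R) by field; apply/eqP; lra.
have -> : 8 / 3 * (2^-1 + kap K T j * T%:R) * C = 8 / 3 * T%:R * ((mu + kap K T j) * C).
  by rewrite /mu; field; apply/eqP; lra.
have : (8 / 3) * (3 / 8 * (E / T%:R)) <= (8 / 3) * ((mu + kap K T j) * C).
  by apply: ler_wpM2l => //; lra.
move=> h6.
nra.
Qed.

End Bound.

Lemma Ij_disj K j j0 p : (4 <= K)%N -> (2 <= j < K)%N -> (2 <= j0 < K)%N ->
  Ij K j p -> Ij K j0 p -> j = j0.
Proof.
move=> K4 hj hj0.
wlog : j j0 hj hj0 / (j <= j0)%N.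
  move=> H; case: (leqP j j0) => h; first exact: H.
  by move=> a b; apply/esym; apply: H => //; apply: ltnW.
move=> le hI hI0; case: (ltngtP j j0) => // lt; last by move: le; rewrite leqNgt lt.
move: hI hI0 => /andP[_ h1] /andP[h2 _].
have := @val_le K j j0.-1 (@K2 K K4) ltac:(lia) ltac:(lia) ltac:(lia).
move=> h3; have := le_lt_trans (le_trans h1 h3) h2; by rewrite ltxx.
Qed.

Lemma sum_ind_le1 K p : (4 <= K)%N -> \sum_(2 <= j < K) ind (Ij K j p) <= 1.
Proof.
move=> K4.
case: (boolP (has (fun j => Ij K j p) (index_iota 2 K))) => [/hasP [j0 j0in Ij0] | nh].
  rewrite (bigD1_seq j0) //= ?iota_uniq // /ind Ij0 big1_seq ?addr0 // => j /andP[jne jin].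
  case: ifP => // hI; exfalso; move/negP: jne; apply; apply/eqP.
  move: jin j0in; rewrite !mem_index_iota => hj hj0.
  exact: (@Ij_disj K j j0 p K4 hj hj0 hI Ij0).
rewrite big1_seq ?ler01 // => j /andP[_ jin]; rewrite /ind ifF //.
by apply/negbTE; move/hasPn: nh; apply.
Qed.

Lemma sumC K T alg : (4 <= K)%N ->
  \sum_(2 <= j < K) Ex alg (dem K T 0) [::] T (Nf K j alg) <= T%:R.
Proof.
move=> K4.
rewrite -(Ex_sum alg (dem K T 0) T [::] nat (index_iota 2 K) xpredT (fun j => Nf K j alg)).
rewrite -[X in _ <= X](Ex_cst alg (dem K T 0) T [::] T%:R).
apply: Ex_mono => [p|y sy]; first exact: (@dem0_01 K T K4 p).
rewrite add0n in sy.
rewrite /Nf /= exchange_big /= -sy -[X in _ <= X%:R](subn0 (size y)) -sumr_const_nat.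
apply: ler_sum => t _.
exact: sum_ind_le1.
Qed.

Lemma kapT K T j : (4 <= K)%N -> (K ^ 3 <= T)%N -> (2 <= j < K)%N ->
  kap K T j * T%:R = (7 * (K%:R - 1) * (K%:R - 2) / 324) / (j%:R - 1).
Proof.
move=> K4 KT /andP[j2 jK].
have j2' : (2:RR) <= j%:R by rewrite (ler_nat _ 2).
have tt : (1 : RR) <= T%:R by rewrite (ler_nat _ 1) (@T0 K T K4 KT).
rewrite /kap (@eps2E K T K4 KT); field.
by apply/andP; split; apply/eqP; lra.
Qed.

Lemma combine (K m : nat) (Tr B : RR) (E C : nat -> RR) :
  (4 <= K)%N -> (1 <= m)%N -> (m < K)%N -> 0 <= Tr -> 0 <= B ->
  (forall j, (2 <= j < K)%N -> E j <= Tr) ->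
  (forall j, (2 <= j < K)%N -> 0 <= C j) ->
  (forall j, (2 <= j < K)%N -> E j <= 8 / 3 * (2^-1 + B / (j%:R - 1)) * C j) ->
  \sum_(2 <= j < K) C j <= Tr ->
  \sum_(2 <= j < K) E j <= (m%:R - 1) * Tr + 8 / 3 * (2^-1 + B / m%:R) * Tr.
Proof.
move=> K4 m1 mK Tr0 B0 hE hC hEC hS.
have m1' : (1 : RR) <= m%:R by rewrite (ler_nat _ 1).
rewrite (big_cat_nat _ (n := m.+1)); [|lia|lia].
apply: lerD.
  apply: le_trans (_ : \sum_(2 <= j < m.+1) Tr <= _).
    rewrite !big_nat; apply: ler_sum => j /andP[j2 jm]; apply: hE; lia.
  rewrite sumr_const_nat -[Tr *+ _]mulr_natl natrB; last by lia.
  rewrite -[m.+1%:R]natr1 (_ : m%:R + 1 - 2 = m%:R - 1 :> RR) //; ring.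
have hS' : \sum_(m.+1 <= j < K) C j <= Tr.
  apply: le_trans hS; rewrite [X in _ <= X](big_cat_nat _ (n := m.+1)); [|lia|lia].
  rewrite lerDr big_nat sumr_ge0 // => j /andP[j2 jm]; apply: hC; lia.
set c := 8 / 3 * (2^-1 + B / m%:R).
have c0 : 0 <= c by rewrite /c mulr_ge0 // addr_ge0 // divr_ge0 //; lra.
apply: le_trans (_ : \sum_(m.+1 <= j < K) c * C j <= _).
  rewrite !big_nat; apply: ler_sum => j /andP[mj jK].
  have hj : (2 <= j < K)%N by lia.
  apply: le_trans (hEC j hj) _; apply: ler_wpM2r; first exact: hC.
  rewrite /c; apply: ler_wpM2l; first lra.
  rewrite lerD2l; apply: ler_wpM2l => //.
  have mj' : m%:R + 1 <= j%:R :> RR by rewrite natr1 ler_nat.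
  rewrite lef_pV2 ?posrE; lra.
by rewrite -mulr_sumr ler_wpM2l.
Qed.

Lemma numeric (K : nat) : (4 <= K)%N -> exists m : nat, [/\ (1 <= m)%N, (m < K)%N &
  (m%:R - 1) + 8 / 3 * (2^-1 + (7 * (K%:R - 1) * (K%:R - 2) / 324) / m%:R)
    <= 9 / 10 * (K%:R - 2) :> RR].
Proof.
move=> K4; case: (leqP K 7) => K7.
  exists 1%N; split => //; first by lia.
  rewrite divr1.
  have : (K = 4 \/ K = 5 \/ K = 6 \/ K = 7)%N by lia.
  by case=> [->|[->|[->|->]]]; lra.
exists (K %/ 4)%N.
have e := divn_eq K 4.
have r3 : (K %% 4 < 4)%N by rewrite ltn_mod.
have m2 : (2 <= K %/ 4)%N by lia.
split; [lia | lia |].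
set m := (K %/ 4)%N in e m2 *.
have hm2 : (2 : RR) <= m%:R by rewrite (ler_nat _ 2).
have hK1 : 4 * m%:R <= K%:R :> RR by rewrite -natrM ler_nat; lia.
have hK2 : K%:R <= 4 * m%:R + 3 :> RR.
  have -> : 4 * m%:R + 3 = (4 * m + 3)%N%:R :> RR by rewrite natrD natrM.
  rewrite ler_nat; lia.
set k := K%:R in hK1 hK2 *; set x := m%:R in hm2 hK1 hK2 *.
have x0 : 0 < x by lra.
rewrite -(ler_pM2r x0).
have -> : (x - 1 + 8 / 3 * (2^-1 + 7 * (k - 1) * (k - 2) / 324 / x)) * x
   = x * (x - 1) + 8 / 3 * (x / 2 + 7 * (k - 1) * (k - 2) / 324).
  by field; apply/eqP; lra.
nra.
Qed.

Section Main.
Variables (K T : nat) (alg : policy).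
Hypothesis K4 : (4 <= K)%N.
Hypothesis KT : (K ^ 3 <= T)%N.
Hypothesis halg : forall h, 0 <= alg h <= 1.

Let Ej j := Ex alg (dem K T j) [::] T (Nf K j alg).
Let Cj j := Ex alg (dem K T 0) [::] T (Nf K j alg).

Lemma low j : (2 <= j < K)%N ->
  eps K T * T%:R / 2 - eps K T / 2 * Ej j <= Ex alg (dem K T j) [::] T (Greg K T j alg).
Proof.
move=> hj.
have -> : eps K T * T%:R / 2 - eps K T / 2 * Ej j =
   Ex alg (dem K T j) [::] T (fun y => (- (eps K T / 2)) * Nf K j alg y + eps K T * T%:R / 2).
  by rewrite Ex_lin Ex_cst /Ej; ring.
apply: Ex_mono => [p|y sy]; first exact: (@demj_01 K T j K4 KT hj p).
rewrite add0n in sy.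
rewrite /Greg /Nf sy big_mkord.
have -> : eps K T * T%:R / 2 = \sum_(t < T) eps K T / 2.
  by rewrite sumr_const card_ord -mulr_natr; ring.
rewrite mulr_sumr -big_split /=; apply: ler_sum => t _.
have := @gap_lb K T j K4 KT hj (alg (take t y)) (halg _).
lra.
Qed.

Lemma hE j : (2 <= j < K)%N -> Ej j <= T%:R.
Proof.
move=> hj; rewrite /Ej -(Ex_cst alg (dem K T j) T [::] T%:R).
apply: Ex_mono => [p|y sy]; first exact: (@demj_01 K T j K4 KT hj p).
by rewrite add0n in sy; rewrite -sy; case/andP: (Nf_bounds K j alg y).
Qed.

Lemma hEge j : (2 <= j < K)%N -> 0 <= Ej j.
Proof.
move=> hj; rewrite /Ej -(Ex_cst alg (dem K T j) T [::] 0).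
apply: Ex_mono => [p|y sy]; first exact: (@demj_01 K T j K4 KT hj p).
by case/andP: (Nf_bounds K j alg y).
Qed.

Lemma hC j : 0 <= Cj j.
Proof.
rewrite /Cj -(Ex_cst alg (dem K T 0) T [::] 0).
apply: Ex_mono => [p|y sy]; first exact: (@dem0_01 K T K4 p).
by case/andP: (Nf_bounds K j alg y).
Qed.

Lemma hEC j : (2 <= j < K)%N ->
  Ej j <= 8 / 3 * (2^-1 + (7 * (K%:R - 1) * (K%:R - 2) / 324) / (j%:R - 1)) * Cj j.
Proof.
move=> hj; rewrite -(@kapT K T j K4 KT hj); exact: (@Ej_bound K T j alg K4 KT hj).
Qed.

Lemma sumE : \sum_(2 <= j < K) Ej j <= 9 / 10 * (K%:R - 2) * T%:R.
Proof.
have [m [m1 mK hm]] := @numeric K K4.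
have k4 := @hK4 K K4.
have tt : (0 : RR) <= T%:R by [].
have B0 : (0 : RR) <= 7 * (K%:R - 1) * (K%:R - 2) / 324.
  by apply: divr_ge0 => //; apply: mulr_ge0; [apply: mulr_ge0|]; lra.
have := @combine K m T%:R _ Ej Cj K4 m1 mK tt B0 hE (fun j _ => hC j) hEC (@sumC K T alg K4).
move=> h; apply: le_trans h _.
rewrite -mulrDl; apply: ler_wpM2r => //.
Qed.

Lemma main_det : eps K T * T%:R / 20 <= exp_regret K T alg.
Proof.
rewrite exp_regretE; last by move=> j hj; exact: (@sumQj K T j K4 KT hj).
have k4 := @hK4 K K4.
have e0 := eps_ge0 K T.
have tt : (0 : RR) <= T%:R by [].
have h1 : \sum_(2 <= j < K) (eps K T * T%:R / 2 - eps K T / 2 * Ej j)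
    <= \sum_(2 <= j < K) Ex alg (dem K T j) [::] T (Greg K T j alg).
  by rewrite !big_nat; apply: ler_sum => j hj; apply: low.
have h2 : \sum_(2 <= j < K) (eps K T * T%:R / 2 - eps K T / 2 * Ej j)
    = (K%:R - 2) * (eps K T * T%:R / 2) - eps K T / 2 * \sum_(2 <= j < K) Ej j.
  rewrite sumrB sumr_const_nat -mulr_sumr; congr (_ - _).
  rewrite -[_ *+ _]mulr_natl natrB; last by lia.
  by [].
have h3 := sumE.
have K2r : 0 < K%:R - 2 :> RR by lra.
suff hS : (K%:R - 2) * (eps K T * T%:R / 20) <=
    \sum_(2 <= j < K) Ex alg (dem K T j) [::] T (Greg K T j alg).
  have -> : eps K T * T%:R / 20 = (K%:R - 2)^-1 * ((K%:R - 2) * (eps K T * T%:R / 20)).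
    by field; apply/eqP; lra.
  by apply: ler_wpM2l => //; rewrite invr_ge0; lra.
apply: le_trans h1; rewrite h2.
have : eps K T / 2 * \sum_(2 <= j < K) Ej j <= eps K T / 2 * (9 / 10 * (K%:R - 2) * T%:R).
  by apply: ler_wpM2l => //; lra.
nra.
Qed.

End Main.

Lemma eps_T_bound K T : (4 <= K)%N -> (K ^ 3 <= T)%N ->
  (20 * 21)^-1 * Num.sqrt (K%:R * T%:R) <= eps K T * T%:R / 20.
Proof.
move=> K4 KT.
have k4 := @hK4 K K4.
have tt : (1 : RR) <= T%:R by rewrite (ler_nat _ 1) (@T0 K T K4 KT).
set a := (20 * 21)^-1 * _; set b := eps K T * T%:R / 20.
have c0 : (0 : RR) <= (20 * 21)^-1 by rewrite invr_ge0; lra.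
have a0 : 0 <= a by rewrite /a mulr_ge0 // sqrtr_ge0.
have b0 : 0 <= b by rewrite /b divr_ge0 ?mulr_ge0 ?eps_ge0 //; lra.
have a2 : a ^+ 2 = K%:R * T%:R / ((20 * 21) ^+ 2).
  rewrite /a exprMn sqr_sqrtr; last by apply: mulr_ge0; lra.
  by field.
have b2 : b ^+ 2 = (K%:R - 2) * T%:R / (216 * 400).
  have -> : b ^+ 2 = eps K T ^+ 2 * T%:R ^+ 2 / 400 by rewrite /b; field.
  rewrite (@eps2E K T K4 KT); field; apply/eqP; lra.
have : a ^+ 2 <= b ^+ 2.
  rewrite a2 b2 ler_pdivrMr; last by lra.
  rewrite mulrAC ler_pdivlMr; last by lra.
  nra.
nra.
Qed.

Theorem mainTheorem10 :
  exists c : RR, 0 < c /\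
  forall (K T : nat), (4 <= K)%N -> (K ^ 3 <= T)%N ->
  forall (d : measure_display) (Omega : measurableType d)
         (P : probability Omega RR) (A : Omega -> policy),
    (forall w h, 0 <= A w h <= 1) ->
    (forall h, measurable_fun setT ((fun w => A w h) : Omega -> measurableTypeR RR)) ->
    ((c * Num.sqrt (K%:R * T%:R))%:E <= \int[P]_w (exp_regret K T (A w))%:E)%E.
Proof.
exists (20 * 21)^-1; split; first by rewrite invr_gt0; lra.
move=> K T K4 KT d Omega P A hA _.
set c := (20 * 21)^-1 * _.
have c0 : 0 <= c by rewrite /c mulr_ge0 ?sqrtr_ge0 // invr_ge0; lra.
have lb w : (c%:E <= (exp_regret K T (A w))%:E)%E.
  rewrite lee_fin; apply: le_trans (@eps_T_bound K T K4 KT) _.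
  exact: (@main_det K T (A w) K4 KT (hA w)).
have hc : (\int[P]_w (cst c%:E) w = c%:E)%E.
  rewrite integral_cst // -[RHS]mule1; congr (_ * _)%E; exact: probability_setT.
rewrite -hc ge0_integralTE; last by move=> w; rewrite /= lee_fin.
rewrite ge0_integralTE; last by move=> w; apply: le_trans (lb w); rewrite lee_fin.
apply: ereal_sup_le => x [h hh <-]; exists h => //= w.
by apply: le_trans (hh w) (lb w).
Qed.
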